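(* Let $\Sigma$ be a finite set of tokens, $c$ a context, and $M,M_1,M_2$ arbitrary language models. Then there exists a token $t\in\Sigma$ that is $\ge\sqrt{MAE_c(M_1,M_2)}$-exposed by $M$ over $M_1$ at $c$ or $\ge\sqrt{MAE_c(M_1,M_2)}$-exposed by $M$ over $M_2$ at $c$.
   Context: Let $n=|\Sigma|$. A context is a finite sequence of tokens from $\Sigma$. A language model $M$ assigns to every context $c$ and token $t\in\Sigma$ a probability $p_M(t\mid c)>0$, with $\sum_{t\in\Sigma}p_M(t\mid c)=1$. For $g:\Sigma\to\mathbb{R}_{>0}$, $GM(g(t)):=\exp\big(\tfrac1n\sum_{t\in\Sigma}\log g(t)\big)$. Typical probability: $tp_c(M):=GM(p_M(t\mid c))$; relative probability: $rp_M(t\mid c):=p_M(t\mid c)/tp_c(M)$. Typical probability ratio: $tpr_c(M_1,M_2):=GM\big(\tfrac{p_{M_1}(t\mid c)}{p_{M_2}(t\mid c)}\big)$. A token $t$ is $\alpha$-exposed by $M_1$ over $M_2$ at $c$ if $\frac{p_{M_1}(t\mid c)}{p_{M_2}(t\mid c)\cdot tpr_c(M_1,M_2)}=\alpha$; it is $\ge\alpha$-exposed if it is $\beta$-exposed for some $\beta\ge\alpha$. Mean absolute exposure: $MAE_c(M_1,M_2):=GM\Big(\max\Big(\tfrac{rp_{M_1}(t\mid c)}{rp_{M_2}(t\mid c)},\tfrac{rp_{M_2}(t\mid c)}{rp_{M_1}(t\mid c)}\Big)\Big)$. *)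

(* Defs.v *)
From mathcomp Require Import all_boot all_order all_algebra.
From mathcomp Require Import all_classical all_reals all_analysis.
Set Implicit Arguments. Unset Strict Implicit. Unset Printing Implicit Defensive.
Import Order.TTheory GRing.Theory Num.Theory.
Local Open Scope ring_scope.

Section LM.
Variables (R : realType) (Sigma : finType).

Definition context := seq Sigma.

Definition model := context -> Sigma -> R.

Definition is_LM (M : model) : Prop :=
  (forall c t, 0 < M c t) /\ (forall c, \sum_(t : Sigma) M c t = 1).

Definition GM (g : Sigma -> R) : R :=
  expR ((#|Sigma|%:R)^-1 * \sum_(t : Sigma) ln (g t)).

Definition tp (M : model) (c : context) : R := GM (fun t => M c t).

Definition rp (M : model) (c : context) (t : Sigma) : R := M c t / tp M c.

Definition tpr (M1 M2 : model) (c : context) : R :=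
  GM (fun t => M1 c t / M2 c t).

Definition exposed (alpha : R) (M1 M2 : model) (c : context) (t : Sigma) : Prop :=
  M1 c t / (M2 c t * tpr M1 M2 c) = alpha.

Definition ge_exposed (alpha : R) (M1 M2 : model) (c : context) (t : Sigma) : Prop :=
  exists beta, alpha <= beta /\ exposed beta M1 M2 c t.

Definition MAE (M1 M2 : model) (c : context) : R :=
  GM (fun t => Num.max (rp M1 c t / rp M2 c t) (rp M2 c t / rp M1 c t)).

End LM.

(* Main.v *)
Require Import Defs.
From mathcomp Require Import all_boot all_order all_algebra.
From mathcomp Require Import all_classical all_reals all_analysis.
From mathcomp Require Import ring lra.
Import Order.TTheory GRing.Theory Num.Theory.
Local Open Scope ring_scope.

Lemma expR_div (R : realType) (a b : R) : expR a / expR b = expR (a - b).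
Proof. by rewrite expRD expRN. Qed.

Lemma sqrt_expR (R : realType) (z : R) : Num.sqrt (expR z) = expR (z / 2).
Proof.
have -> : expR z = expR (z / 2) ^+ 2 by rewrite expr2 -expRD; congr expR; lra.
by rewrite sqrtr_sqr ger0_norm // expR_ge0.
Qed.

Theorem theorem1 (R : realType) (Sigma : finType) (c : context Sigma)
  (M M1 M2 : model R Sigma) :
  is_LM M -> is_LM M1 -> is_LM M2 ->
  exists t : Sigma,
    ge_exposed (Num.sqrt (MAE M1 M2 c)) M M1 c t \/
    ge_exposed (Num.sqrt (MAE M1 M2 c)) M M2 c t.
Proof.
move=> [Mp Ms] [M1p _] [M2p _].
have [t0 _|h0] := pickP (@predT Sigma); last first.
  by move: (Ms c); rewrite big_pred0 // => /esym /eqP; rewrite oner_eq0.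
have cardP : (0 < #|Sigma|)%N by apply/card_gt0P; exists t0.
set n : R := #|Sigma|%:R.
have nk : n * n^-1 = 1 by rewrite divff // pnatr_eq0 -lt0n.
set k := n^-1.
set A := fun t => ln (M c t).
set B := fun t => ln (M1 c t).
set D := fun t => ln (M2 c t).
have hA t : M c t = expR (A t) by rewrite /A lnK // posrE.
have hB t : M1 c t = expR (B t) by rewrite /B lnK // posrE.
have hD t : M2 c t = expR (D t) by rewrite /D lnK // posrE.
set SA := \sum_(t : Sigma) A t.
set SB := \sum_(t : Sigma) B t.
set SD := \sum_(t : Sigma) D t.
have GMe (a : Sigma -> R) : GM (fun t => expR (a t)) = expR (k * \sum_(t : Sigma) a t).
  by rewrite /GM; congr expR; congr (_ * _); apply: eq_bigr => t _; rewrite expRK.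
have tpr1 : tpr M M1 c = expR (k * (SA - SB)).
  rewrite /tpr -sumrB -GMe; congr GM; apply: funext => t.
  by rewrite hA hB expR_div.
have tpr2 : tpr M M2 c = expR (k * (SA - SD)).
  rewrite /tpr -sumrB -GMe; congr GM; apply: funext => t.
  by rewrite hA hD expR_div.
have rp1 t : rp M1 c t = expR (B t - k * SB).
  rewrite /rp /tp -expR_div -GMe hB; congr (_ / GM _).
  by apply: funext => s; rewrite hB.
have rp2 t : rp M2 c t = expR (D t - k * SD).
  rewrite /rp /tp -expR_div -GMe hD; congr (_ / GM _).
  by apply: funext => s; rewrite hD.
set x := fun t => (B t - k * SB) - (D t - k * SD).
have hMAE : MAE M1 M2 c = expR (k * \sum_(t : Sigma) `|x t|).
  rewrite /MAE -GMe; congr GM; apply: funext => t.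
  rewrite rp1 rp2 !expR_div /x.
  set y := (B t - k * SB) - (D t - k * SD).
  have -> : D t - k * SD - (B t - k * SB) = - y by rewrite /y; lra.
  have [hy|hy] := lerP 0 y.
    rewrite ger0_norm // max_l // ler_expR; lra.
  rewrite ltr0_norm // max_r // ler_expR; lra.
set C := k * (\sum_(t : Sigma) `|x t|) / 2.
rewrite hMAE sqrt_expR -/C.
set u := fun t => A t - B t - k * (SA - SB).
set v := fun t => A t - D t - k * (SA - SD).
suff [t ht] : exists t, C <= u t \/ C <= v t.
  exists t; case: ht => ht; [left|right]; (eexists; split; [|reflexivity]).
    by rewrite tpr1 hA hB -expRD expR_div ler_expR; move: ht; rewrite /C /u; lra.
  by rewrite tpr2 hA hD -expRD expR_div ler_expR; move: ht; rewrite /C /v; lra.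
apply: contrapT => /forallNP H.
have Hlt t : (u t + v t) / 2 + `|x t| / 2 < C.
  have hu : u t < C by rewrite ltNge; apply/negP => h; apply: (H t); left.
  have hv : v t < C by rewrite ltNge; apply/negP => h; apply: (H t); right.
  have -> : x t = v t - u t by rewrite /x /u /v /=; ring.
  have [hy|hy] := lerP 0 (v t - u t).
    rewrite ger0_norm //; lra.
  rewrite ltr0_norm //; lra.
have hk y : k * y *+ #|Sigma| = y.
  by rewrite -mulr_natr -[_%:R]/n mulrAC (mulrC k n) nk mul1r.
have : \sum_(t : Sigma) ((u t + v t) / 2 + `|x t| / 2) < \sum_(t : Sigma) C.
  apply: ltr_sum => //; apply/hasP; exists t0 => //; exact: mem_index_enum.
rewrite sumr_const big_split /= -!mulr_suml.
have su : \sum_(t : Sigma) (u t + v t) = 0.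
  rewrite big_split /= /u /v !sumrB !sumr_const !hk /SA /SB /SD; ring.
have hC : C *+ #|Sigma| = (\sum_(t : Sigma) `|x t|) / 2 by rewrite /C -mulrA hk.
rewrite hC su; lra.
Qed.
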